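(* Let $n\ge 3$ and let $(u,v)$ be an MAB pair of binary words with $|u|=|v|=n$. Put $i=\mathrm{lsb}(u,v)$ and $j=\mathrm{lsb}(v,u)$. Then $i+j>n$ if and only if there exist $\alpha,\gamma,\beta,\beta',\gamma',\alpha'\in\Sigma^+$ such that $u=\alpha\gamma\beta$, $v=\beta'\gamma'\alpha'$, $\alpha\gamma\sim_{\mathrm{abl}}\gamma'\alpha'$, $\gamma\beta\sim_{\mathrm{abl}}\beta'\gamma'$, $|\alpha\gamma|=j$, $|\gamma\beta|=i$, and both $(\gamma\beta,\beta'\gamma')$ and $(\alpha\gamma,\gamma'\alpha')$ are MAU pairs.
   Context: Let $\Sigma=\{a,b\}$. For a word $w$ and a letter $c$, $|w|_c$ denotes the number of occurrences of $c$ in $w$. Two words $x,y$ are abelian equivalent, written $x\sim_{\mathrm{abl}}y$, if $|x|_c=|y|_c$ for all $c\in\Sigma$. For words $u,v$: a pair $(x,y)$ is an internal abelian-border of $(u,v)$ if $x$ is a nonempty proper suffix of $u$, $y$ is a proper prefix of $v$, and $x\sim_{\mathrm{abl}}y$; it is an external abelian-border of $(u,v)$ if $x$ is a nonempty proper prefix of $u$, $y$ is a proper suffix of $v$, and $x\sim_{\mathrm{abl}}y$. The pair $(u,v)$ is mutually abelian-bordered (MAB) if it has both an internal and an external abelian-border, and mutually abelian-unbordered (MAU) if it has neither. If $(u,v)$ has an internal abelian-border, $\mathrm{sb}(u,v)$ denotes its internal abelian-border $(x,y)$ of minimal length and $\mathrm{lsb}(u,v)=|x|$ is that minimal length. *)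

(* Defs.v *)
From HB Require Import structures.
From mathcomp Require Import all_boot.
Set Implicit Arguments. Unset Strict Implicit. Unset Printing Implicit Defensive.

Inductive letter := La | Lb.
Definition letter_eqb (x y : letter) : bool :=
  match x, y with La, La | Lb, Lb => true | _, _ => false end.
Lemma letter_eqP : Equality.axiom letter_eqb.
Proof. by case; case; constructor. Qed.
HB.instance Definition _ := hasDecEq.Build letter letter_eqP.

Definition word := seq letter.

Definition abel_eq (x y : word) : Prop :=
  forall c : letter, count_mem c x = count_mem c y.

Definition int_border (u v x y : word) : Prop :=
  [/\ x != [::], suffix x u, size x < size u,
      prefix y v & size y < size v] /\ abel_eq x y.

Definition ext_border (u v x y : word) : Prop :=
  [/\ x != [::], prefix x u, size x < size u,
      suffix y v & size y < size v] /\ abel_eq x y.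

Definition has_int_border (u v : word) : Prop := exists x y, int_border u v x y.
Definition has_ext_border (u v : word) : Prop := exists x y, ext_border u v x y.

Definition MAB (u v : word) : Prop := has_int_border u v /\ has_ext_border u v.
Definition MAU (u v : word) : Prop := ~ has_int_border u v /\ ~ has_ext_border u v.

Definition is_lsb (u v : word) (i : nat) : Prop :=
  (exists x y, int_border u v x y /\ size x = i) /\
  (forall x y, int_border u v x y -> i <= size x).

(* Main.v *)
Require Import Defs.
From mathcomp Require Import all_boot.
From mathcomp Require Import zify.
Set Implicit Arguments. Unset Strict Implicit.

Lemma size_counts (s : word) : size s = count_mem La s + count_mem Lb s.
Proof. elim: s => //= -[] s IH /=; rewrite IH; lia. Qed.

Lemma abel_size x y : abel_eq x y -> size x = size y.
Proof. by move=> H; rewrite !size_counts !H. Qed.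

Lemma abel_sym x y : abel_eq x y -> abel_eq y x.
Proof. by move=> H c; rewrite H. Qed.

Lemma mau_min (u v p q : word) : suffix p u -> prefix q v -> abel_eq p q ->
  size p < size u -> size q < size v ->
  (forall x y, int_border u v x y -> size p <= size x) -> MAU p q.
Proof.
move=> sp pq apq spu sqv Hmin; have Spq := abel_size apq.
split.
- move=> [x [y [[xn xs xlt yp ylt] xy]]].
  have Sxy := abel_size xy.
  suff: size p <= size x by rewrite leqNgt xlt.
  apply: (Hmin x y); split => //; split => //.
  + exact: suffix_trans xs sp.
  + lia.
  + exact: prefix_trans yp pq.
  + lia.
- move=> [x [y [[xn xp xlt ys ylt] xy]]].
  have Sxy := abel_size xy.
  case/prefixP: xp => x' Ep. case/suffixP: ys => y' Eq.
  change word in x'; change word in y'.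
  have ax : abel_eq x' y'.
    move=> c; have := apq c; rewrite Ep Eq !count_cat (xy c); lia.
  have Sp : size p = size x + size x' by rewrite Ep size_cat.
  have x0 : size x <> 0 by move=> /eqP; rewrite size_eq0 (negbTE xn).
  have Sq : size q = size y' + size y by rewrite Eq size_cat.
  suff: size p <= size x' by lia.
  apply: (Hmin x' y'); split => //; split.
  + apply/eqP => E; rewrite E /= in Sp; lia.
  + apply: suffix_trans sp; rewrite Ep; exact: suffix_suffix.
  + lia.
  + apply: prefix_trans pq; rewrite Eq; exact: prefix_prefix.
  + have := abel_size ax; lia.
Qed.

Lemma mau_sym (p q : word) : MAU p q -> MAU q p.
Proof.
move=> [H1 H2]; split.
- move=> [x [y [[xn xs xlt yp ylt] xy]]]; apply: H2; exists y, x.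
  have S := abel_size xy.
  split; last exact: abel_sym.
  split => //. by rewrite -size_eq0 -S size_eq0.
- move=> [x [y [[xn xp xlt ys ylt] xy]]]; apply: H1; exists y, x.
  have S := abel_size xy.
  split; last exact: abel_sym.
  split => //. by rewrite -size_eq0 -S size_eq0.
Qed.

Lemma ne0 (s : word) : 0 < size s -> s != [::].
Proof. by case: s. Qed.

Theorem mainTheorem3 (n : nat) (u v : word) (i j : nat) :
  3 <= n -> size u = n -> size v = n -> MAB u v ->
  is_lsb u v i -> is_lsb v u j ->
  (n < i + j <->
   exists alpha gamma beta beta' gamma' alpha' : word,
     [/\ alpha != [::], gamma != [::], beta != [::],
         beta' != [::] & gamma' != [::]] /\ alpha' != [::] /\
     u = alpha ++ gamma ++ beta /\ v = beta' ++ gamma' ++ alpha' /\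
     abel_eq (alpha ++ gamma) (gamma' ++ alpha') /\
     abel_eq (gamma ++ beta) (beta' ++ gamma') /\
     size (alpha ++ gamma) = j /\ size (gamma ++ beta) = i /\
     MAU (gamma ++ beta) (beta' ++ gamma') /\
     MAU (alpha ++ gamma) (gamma' ++ alpha')).
Proof.
move=> _ Su Sv _ [[x [y [[[xn xs xlt yp ylt] xy] xi]]] imin]
  [[x2 [y2 [[[xn2 xs2 xlt2 yp2 ylt2] xy2] xj]]] jmin].
have Sxy := abel_size xy; have Sxy2 := abel_size xy2.
split; last first.
  move=> [al [ga [be [_ [_ [_ [[_ g0 _ _ _] [_ [Eu [_ [_ [_ [Sj [Si _]]]]]]]]]]]]]].
  have : size ga <> 0 by move=> /eqP; rewrite size_eq0 (negbTE g0).
  move: Sj Si; rewrite !size_cat -Su Eu !size_cat; lia.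
move=> Hij.
have Ex : x = drop (n - i) u.
  by move: xs; rewrite suffixE Su xi => /eqP.
have Ey : y = take i v.
  by move: yp; rewrite prefixE -Sxy xi => /eqP.
have Ex2 : x2 = drop (n - j) v.
  by move: xs2; rewrite suffixE Sv xj => /eqP.
have Ey2 : y2 = take j u.
  by move: yp2; rewrite prefixE -Sxy2 xj => /eqP.
set c := i + j - n.
have cE : c = i + j - n by [].
exists (take (n - i) u), (take c (drop (n - i) u)), (drop c (drop (n - i) u)),
  (take (n - j) v), (take c (drop (n - j) v)), (drop c (drop (n - j) v)).
have E1 : take c (drop (n - i) u) ++ drop c (drop (n - i) u) = x
  by rewrite cat_take_drop.
have E2 : take (n - i) u ++ take c (drop (n - i) u) = y2
  by rewrite Ey2 -takeD; congr take; lia.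
have E3 : take (n - j) v ++ take c (drop (n - j) v) = y
  by rewrite Ey -takeD; congr take; lia.
have E4 : take c (drop (n - j) v) ++ drop c (drop (n - j) v) = x2
  by rewrite cat_take_drop.
rewrite E1 E2 E3 E4.
split.
  split; apply: ne0; rewrite ?size_drop; try rewrite size_takel;
    rewrite ?size_drop; lia.
split; first by apply: ne0; rewrite !size_drop; lia.
split; first by rewrite Ex cat_take_drop.
split; first by rewrite Ex2 cat_take_drop.
split; first exact: abel_sym.
split => //.
split; first by rewrite Ey2 size_takel; lia.
split; first by lia.
split.
  apply: (mau_min xs yp xy) => //; by [rewrite -Sxy | move=> ?? /imin; rewrite xi].
apply: mau_sym; apply: (mau_min xs2 yp2 xy2) => //;
  by [rewrite -Sxy2 | move=> ?? /jmin; rewrite xj].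
Qed.
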